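(* For $n=2$, $DCell_1$ is Hamiltonian but not Hamiltonian-connected. The same holds for every Generalized $DCell_1$ with $n=2$.
   Context: $DCell_0$ is the complete graph $K_n$ ($t_0=n$ vertices). $DCell_1$ consists of $t_0+1$ vertex-disjoint copies $D_0^0,\dots,D_0^{t_0}$ of $K_n$, with vertices of each copy numbered $0,\dots,n-1$, and for each pair $a<b$ the vertex numbered $b-1$ of $D_0^a$ is joined to the vertex numbered $a$ of $D_0^b$. A Generalized $DCell_1$ uses instead any set of edges between the copies such that each pair of distinct copies is joined by exactly one edge and each vertex is incident with exactly one such edge. A graph is Hamiltonian-connected if every two distinct vertices are the endpoints of a Hamiltonian path. *)

(* Defs.v *)
From mathcomp Require Import all_boot.
Set Implicit Arguments. Unset Strict Implicit. Unset Printing Implicit Defensive.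

(* Vertices of a DCell_1 built from K_n: pairs (copy index a in {0..n}, vertex number i in {0..n-1}). *)
Definition dvert (n : nat) : finType := ('I_n.+1 * 'I_n)%type.

Definition ham_cycle (T : finType) (e : rel T) (s : seq T) : bool :=
  [&& uniq s, size s == #|T|, 2 < size s & cycle e s].

Definition hamiltonian (T : finType) (e : rel T) : Prop :=
  exists s : seq T, ham_cycle e s.

Definition ham_path (T : finType) (e : rel T) (u v : T) (p : seq T) : bool :=
  [&& uniq (u :: p), size (u :: p) == #|T|, path e u p & last u p == v].

Definition ham_connected (T : finType) (e : rel T) : Prop :=
  forall u v : T, u != v -> exists p : seq T, ham_path e u v p.

Definition intra_edge (n : nat) (x y : dvert n) : bool :=
  (x.1 == y.1) && (x.2 != y.2).

Definition dcell_link (n : nat) (x y : dvert n) : bool :=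
  let a := nat_of_ord x.1 in let i := nat_of_ord x.2 in
  let b := nat_of_ord y.1 in let j := nat_of_ord y.2 in
  [&& a < b, i == b.-1 & j == a] || [&& b < a, j == a.-1 & i == b].

Definition dcell1 (n : nat) : rel (dvert n) :=
  fun x y => intra_edge x y || dcell_link x y.

Definition gen_links (n : nat) (E : rel (dvert n)) : Prop :=
  [/\ (forall x y, E x y = E y x),
      (forall x y, E x y -> x.1 != y.1),
      (forall a b : 'I_n.+1, a != b ->
         #|[set xy : dvert n * dvert n | [&& xy.1.1 == a, xy.2.1 == b & E xy.1 xy.2]]| = 1)
    & (forall x, #|[set y | E x y]| = 1)].

Definition gdcell1 (n : nat) (E : rel (dvert n)) : rel (dvert n) :=
  fun x y => intra_edge x y || E x y.

(* Main.v *)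
Require Import Defs.
From mathcomp Require Import all_boot.
Set Implicit Arguments. Unset Strict Implicit. Unset Printing Implicit Defensive.

Fixpoint nseqs (k : nat) : seq (seq nat) :=
  if k is k'.+1 then [seq x :: s | x <- iota 0 6, s <- nseqs k'] else [:: [::]].
Definition pn (a : nat) := if odd a then a.-1 else a.+1.
Definition intran (a b : nat) := (a./2 == b./2) && (a != b).
Definition gn (t : seq nat) : rel nat := fun a b => intran a b || (b == nth 0 t a).
Definition cycn (t : seq nat) : seq nat :=
  let a2 := nth 0 t 1 in let a3 := pn a2 in let a4 := nth 0 t a3 in [:: 0; 1; a2; a3; a4; pn a4].
Definition validn (t : seq nat) := all (fun a => (nth 0 t a < 6) && (nth 0 t (nth 0 t a) == a) && ((nth 0 t a)./2 != a./2)) (iota 0 6).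
Definition hpn (e : rel nat) u v p := [&& uniq (u::p), path e u p & last u p == v].
Definition goodn t := [&& uniq (cycn t), cycle (gn t) (cycn t) & all (fun p => ~~ hpn (gn t) 0 (nth 0 t 1) p) (nseqs 5)].
Lemma check : all (fun t => if validn t then goodn t else true) (nseqs 6).
Proof. vm_compute. reflexivity. Qed.

Lemma mem_nseqs k s : size s = k -> all (fun a => a < 6) s -> s \in nseqs k.
Proof.
elim: k s => [|k IH] [|a s] //.
move=> [Hs] /andP [Ha Hall].
have -> : nseqs k.+1 = [seq x :: s | x <- iota 0 6, s <- nseqs k] by [].
by apply: (allpairs_f (fun x (s : seq nat) => x :: s)); [rewrite mem_iota | apply: IH].
Qed.

Definition V := dvert 2.
Definition code (x : V) : nat := 2 * x.1 + x.2.
Definition decode (n : nat) : V := (inord (n./2), inord (odd n)).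
Lemma decodeK x : decode (code x) = x.
Proof. apply/eqP; move: x => [[[|[|[|a]]] Ha] [[|[|i]] Hi]] //.
all: by rewrite /decode /code xpair_eqE -!val_eqE /= !inordK. Qed.
Lemma code_inj : injective code.
Proof. by move=> x y H; rewrite -(decodeK x) H decodeK. Qed.
Lemma code_lt x : code x < 6.
Proof. by move: x => [[[|[|[|a]]] Ha] [[|[|i]] Hi]]. Qed.
Lemma codeK a : a < 6 -> code (decode a) = a.
Proof. by case: a => [|[|[|[|[|[|a]]]]]] //= _; rewrite /code /= !inordK. Qed.
Lemma half_code x : (code x)./2 = x.1.
Proof. by move: x => [[[|[|[|a]]] Ha] [[|[|i]] Hi]]. Qed.
Lemma intra_code x y : intra_edge x y = intran (code x) (code y).
Proof. move: x y => [[[|[|[|a]]] Ha] [[|[|i]] Hi]] [[[|[|[|b]]] Hb] [[|[|j]] Hj]] //. Qed.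
Lemma card_V : #|V| = 6.
Proof. by rewrite card_prod !card_ord. Qed.

Lemma path_code (e : rel V) en : (forall x y, e x y = en (code x) (code y)) ->
  forall u p, path e u p = path en (code u) (map code p).
Proof. by move=> He u p; elim: p u => [|y p IH] u //=; rewrite He IH. Qed.

Lemma cycle_code (e : rel V) en : (forall x y, e x y = en (code x) (code y)) ->
  forall s, cycle e s = cycle en (map code s).
Proof. by move=> He [|x p] //=; rewrite (path_code He) map_rcons. Qed.

Definition pp (x : V) : V := (x.1, inord (~~ odd x.2)).
Lemma code_pp x : code (pp x) = pn (code x).
Proof. move: x => [[[|[|[|a]]] Ha] [[|[|i]] Hi]] //.
all: by rewrite /pp /code /pn /= inordK. Qed.
Definition x0 : V := (ord0, ord0).

Definition cyc (f : V -> V) : seq V :=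
  let a1 := pp x0 in let a2 := f a1 in let a3 := pp a2 in let a4 := f a3 in
  let a5 := pp a4 in [:: x0; a1; a2; a3; a4; a5].

Lemma main (f : V -> V) (e : rel V) :
  (forall x, f (f x) = x) -> (forall x, (f x).1 != x.1) ->
  (forall x y, e x y = intra_edge x y || (y == f x)) ->
  hamiltonian e /\ ~ ham_connected e.
Proof.
move=> ff f1 He.
pose t := [seq code (f (decode n)) | n <- iota 0 6].
have tc : forall x, nth 0 t (code x) = code (f x).
  by move=> x; rewrite (nth_map 0) ?size_iota ?code_lt // nth_iota ?code_lt // add0n decodeK.
have tc' : forall a, a < 6 -> nth 0 t a = code (f (decode a)).
  by move=> a Ha; rewrite -{1}(codeK Ha) tc.
have eg : forall x y, e x y = gn t (code x) (code y).
  by move=> x y; rewrite He /gn intra_code tc (inj_eq code_inj).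
have vt : validn t.
  apply/allP => a; rewrite mem_iota add0n => /andP [_ Ha].
  rewrite tc' // code_lt tc ff (codeK Ha) eqxx /= half_code.
  by have := f1 (decode a); rewrite -val_eqE /= -(half_code (decode a)) codeK.
have mt : t \in nseqs 6.
  apply: mem_nseqs; first by rewrite size_map size_iota.
  by apply/allP => a /mapP [n _ ->]; rewrite code_lt.
have := allP check t mt; rewrite vt => /and3P [Hu Hc Hn].
have Hm : map code (cyc f) = cycn t.
  have e1 : nth 0 t 1 = code (f (pp x0)) by rewrite -tc code_pp.
  by rewrite /cycn e1 -!code_pp tc -!code_pp /cyc /= code_pp.
split.
  exists (cyc f); rewrite /ham_cycle card_V.
  by rewrite -(map_inj_uniq code_inj) Hm Hu (cycle_code eg) Hm Hc.
move=> Hcon.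
have hne : x0 != f (pp x0).
  by apply/negP => /eqP H; have := f1 (pp x0); rewrite -H.
have [p /and4P [Hpu Hps Hpp Hpl]] := Hcon _ _ hne.
have sp : size p = 5 by move: Hps; rewrite card_V /= => /eqP [].
have mp : map code p \in nseqs 5.
  apply: mem_nseqs; first by rewrite size_map.
  by apply/allP => a /mapP [n _ ->]; rewrite code_lt.
have := allP Hn _ mp; rewrite /hpn.
have -> : nth 0 t 1 = code (f (pp x0)) by rewrite -tc code_pp.
have -> : 0 = code x0 by [].
rewrite -map_cons (map_inj_uniq code_inj) Hpu -(path_code eg) Hpp /=.
by rewrite last_map (inj_eq code_inj) Hpl.
Qed.

Definition t0 : seq nat := [:: 2; 4; 0; 5; 1; 3].
Definition f0 (x : V) : V := decode (nth 0 t0 (code x)).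
Lemma code_f0 x : code (f0 x) = nth 0 t0 (code x).
Proof. rewrite /f0 codeK //; by move: x => [[[|[|[|a]]] Ha] [[|[|i]] Hi]]. Qed.

Lemma part1 : hamiltonian (@dcell1 2) /\ ~ ham_connected (@dcell1 2).
Proof.
apply: (@main f0).
- move=> x; apply: code_inj; rewrite !code_f0.
  by move: x => [[[|[|[|a]]] Ha] [[|[|i]] Hi]].
- move=> x; rewrite -val_eqE -[val (f0 x).1]/(nat_of_ord (f0 x).1) -[val x.1]/(nat_of_ord x.1) -!half_code code_f0.
  by move: x => [[[|[|[|a]]] Ha] [[|[|i]] Hi]].
- move=> x y; rewrite /dcell1; congr orb.
  rewrite -(inj_eq code_inj) code_f0.
  by move: x y => [[[|[|[|a]]] Ha] [[|[|i]] Hi]] [[[|[|[|b]]] Hb] [[|[|j]] Hj]].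
Qed.

Lemma part2 (E : rel (dvert 2)) : gen_links E ->
  hamiltonian (gdcell1 E) /\ ~ ham_connected (gdcell1 E).
Proof.
case=> Hsym Hdiff _ Hone.
pose f (x : V) : V := odflt x [pick y | E x y].
have Ef : forall x y, E x y = (y == f x).
  move=> x y; have [y0 Hy0] := cards1P (introT eqP (Hone x)).
  have Hy : forall z, E x z = (z == y0).
    move=> z; have := congr1 (fun S : {set dvert 2} => z \in S) Hy0; by rewrite inE in_set1.
  rewrite /f; case: pickP => [z Pz|none] /=.
    by rewrite Hy; move: Pz; rewrite Hy => /eqP ->.
  by move: (none y0); rewrite Hy eqxx.
apply: (@main f).
- move=> x; apply/eqP; rewrite eq_sym -Ef Hsym Ef //.
- by move=> x; rewrite eq_sym; apply: Hdiff; rewrite Ef.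
- by move=> x y; rewrite /gdcell1 Ef.
Qed.

Theorem lemma2 :
  (hamiltonian (@dcell1 2) /\ ~ ham_connected (@dcell1 2)) /\
  (forall E : rel (dvert 2), gen_links E ->
     hamiltonian (gdcell1 E) /\ ~ ham_connected (gdcell1 E)).
Proof. split; [exact: part1 | exact: part2]. Qed.
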